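(* Let $k\geq1$ and $S=sgp^+\langle a,b\mid a^kb=b\rangle$. Then $S$ is prefix-automatic but not biautomatic.
   Context: $sgp^+\langle A\mid R\rangle$ is the free semigroup $A^+$ (nonempty words) modulo the congruence generated by $R$; $A^*$ is the free monoid with empty word $\varepsilon$. Automaticity: regular = accepted by a finite automaton. With $\$\notin A$, $A(2,\$)=(A\cup\{\$\})^2\setminus\{(\$,\$)\}$; $(\alpha,\beta)\delta_A^R$ (resp. $\delta_A^L$) is the word over $A(2,\$)$ obtained by padding the shorter word on the right (resp. left) with $\$$'s and reading letter pairs. For a semigroup $S$ generated by a finite set $A$, $\phi:A^+\to S$ canonical, $L\subseteq A^+$ regular with $\phi(L)=S$, write $\alpha=\beta$ if $\phi(\alpha)=\phi(\beta)$, and for $a\in A\cup\{\varepsilon\}$: $L_a^\$=\{(\alpha,\beta)\delta^R_A:\alpha a=\beta\}$, ${}^\$L_a=\{(\alpha,\beta)\delta^L_A:\alpha a=\beta\}$, ${}_aL^\$=\{(\alpha,\beta)\delta^R_A:a\alpha=\beta\}$, ${}^\$_aL=\{(\alpha,\beta)\delta^L_A:a\alpha=\beta\}$ (with $\alpha,\beta\in L$). $S$ is automatic if some such $(A,L)$ (for some finite generating set $A$) has all $L_a^\$$ regular; biautomatic if some $(A,L)$ has all four families regular; prefix-automatic if some automatic structure $(A,L)$ also has $\{(\alpha,\beta)\delta_A^R:\alpha\in L,\beta\in\mathrm{Pref}(L),\alpha=\beta\}$ regular ($\mathrm{Pref}(L)$ = prefixes of words of $L$). *)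

(* Defs.v *)
From Stdlib Require Import Relation_Operators.
From mathcomp Require Import all_boot.
Set Implicit Arguments. Unset Strict Implicit. Unset Printing Implicit Defensive.

Record dfa (Sigma : finType) := DFA {
  dfa_state : finType;
  dfa_start : dfa_state;
  dfa_final : pred dfa_state;
  dfa_trans : dfa_state -> Sigma -> dfa_state }.

Definition dfa_accept (Sigma : finType) (M : dfa Sigma) (w : seq Sigma) : bool :=
  @dfa_final _ M (foldl (@dfa_trans _ M) (@dfa_start _ M) w).

Definition regular (Sigma : finType) (L : seq Sigma -> Prop) : Prop :=
  exists M : dfa Sigma, forall w, L w <-> dfa_accept M w.

(* A(2,$) = (A u {$})^2 \ {($,$)}, with $ represented by None. *)
Notation A2 A := ({p : option A * option A | p != (None, None)}).

Definition padR (A : Type) (n : nat) (s : seq A) : seq (option A) :=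
  map Some s ++ nseq (n - size s) None.
Definition padL (A : Type) (n : nat) (s : seq A) : seq (option A) :=
  nseq (n - size s) None ++ map Some s.

Definition deltaR (A : finType) (al be : seq A) : seq (A2 A) :=
  let n := maxn (size al) (size be) in
  pmap (fun p => insub p : option (A2 A)) (zip (padR n al) (padR n be)).
Definition deltaL (A : finType) (al be : seq A) : seq (A2 A) :=
  let n := maxn (size al) (size be) in
  pmap (fun p => insub p : option (A2 A)) (zip (padL n al) (padL n be)).

(* A semigroup S = X^+ / E, where X is a finite alphabet and E a congruence on
   X-words; elements of S are represented by nonempty X-words, and two
   representatives denote the same element iff they are E-related.
   A finite generating set of S is given by an index finType A and an
   injective (in S) map gen : A -> S. *)
Section Presented.
Variables (X : finType) (E : seq X -> seq X -> Prop).

Definition phi (A : finType) (gen : A -> seq X) (w : seq A) : seq X :=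
  flatten (map gen w).

Definition gen_set (A : finType) (gen : A -> seq X) : Prop :=
  [/\ forall i, gen i != [::],
      forall i j, E (gen i) (gen j) -> i = j
    & forall x, x != [::] -> exists w : seq A, w != [::] /\ E x (phi gen w)].

Definition rep_lang (A : finType) (gen : A -> seq X) (L : seq A -> Prop) :=
  [/\ regular L,
      forall w, L w -> w != [::]
    & forall x, x != [::] -> exists w, L w /\ E x (phi gen w)].

Definition ext (A : Type) (oa : option A) : seq A :=
  if oa is Some a then [:: a] else [::].

Definition LaR (A : finType) (gen : A -> seq X) (L : seq A -> Prop)
  (oa : option A) : seq (A2 A) -> Prop :=
  fun w => exists al be, [/\ L al, L be,
    E (phi gen (al ++ ext oa)) (phi gen be) & w = deltaR al be].
Definition LaL (A : finType) (gen : A -> seq X) (L : seq A -> Prop)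
  (oa : option A) : seq (A2 A) -> Prop :=
  fun w => exists al be, [/\ L al, L be,
    E (phi gen (al ++ ext oa)) (phi gen be) & w = deltaL al be].
Definition aLR (A : finType) (gen : A -> seq X) (L : seq A -> Prop)
  (oa : option A) : seq (A2 A) -> Prop :=
  fun w => exists al be, [/\ L al, L be,
    E (phi gen (ext oa ++ al)) (phi gen be) & w = deltaR al be].
Definition aLL (A : finType) (gen : A -> seq X) (L : seq A -> Prop)
  (oa : option A) : seq (A2 A) -> Prop :=
  fun w => exists al be, [/\ L al, L be,
    E (phi gen (ext oa ++ al)) (phi gen be) & w = deltaL al be].

Definition automatic_structure (A : finType) (gen : A -> seq X)
  (L : seq A -> Prop) : Prop :=
  [/\ gen_set gen, rep_lang gen L & forall oa, regular (LaR gen L oa)].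

Definition automatic : Prop :=
  exists (A : finType) (gen : A -> seq X) (L : seq A -> Prop),
    automatic_structure gen L.

Definition biautomatic : Prop :=
  exists (A : finType) (gen : A -> seq X) (L : seq A -> Prop),
    [/\ gen_set gen, rep_lang gen L &
      forall oa, [/\ regular (LaR gen L oa), regular (LaL gen L oa),
                     regular (aLR gen L oa) & regular (aLL gen L oa)]].

Definition Pref (A : Type) (L : seq A -> Prop) : seq A -> Prop :=
  fun be => exists ga, L (be ++ ga).

Definition prefix_automatic : Prop :=
  exists (A : finType) (gen : A -> seq X) (L : seq A -> Prop),
    automatic_structure gen L /\
    regular (fun w : seq (A2 A) => exists al be,
      [/\ L al, Pref L be, E (phi gen al) (phi gen be) & w = deltaR al be]).

End Presented.

Definition la : bool := true.
Definition lb : bool := false.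

Definition sk_step (k : nat) (x y : seq bool) : Prop :=
  exists u v, x = u ++ (nseq k la ++ [:: lb]) ++ v /\ y = u ++ [:: lb] ++ v.

Definition sk_cong (k : nat) : seq bool -> seq bool -> Prop :=
  clos_refl_sym_trans (seq bool) (sk_step k).

(* Main.v *)
Require Import Defs.
From Stdlib Require Import Relation_Operators.
From mathcomp Require Import all_boot zify.
Set Implicit Arguments. Unset Strict Implicit. Unset Printing Implicit Defensive.

Lemma nseq_cons_comm (T : Type) (a : T) n (v : seq T) :
  nseq n a ++ a :: v = a :: nseq n a ++ v.
Proof. by elim: n => //= n ->. Qed.

Section Semi.
Variable k : nat.
Hypothesis kpos : 0 < k.
Local Notation E := (sk_cong k).

Lemma E_refl x : E x x. Proof. exact: rst_refl. Qed.
Lemma E_sym x y : E x y -> E y x. Proof. exact: rst_sym. Qed.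
Lemma E_trans x y z : E x y -> E y z -> E x z. Proof. exact: rst_trans. Qed.

Lemma E_catl p u v : E u v -> E (p ++ u) (p ++ v).
Proof.
elim=> {u v} [x y [u [v [-> ->]]]| x | x y _ IH | x y z _ IH1 _ IH2].
- by apply: rst_step; exists (p ++ u), v; rewrite !catA.
- exact: rst_refl.
- exact: rst_sym.
- exact: rst_trans IH2.
Qed.

Lemma E_catr q u v : E u v -> E (u ++ q) (v ++ q).
Proof.
elim=> {u v} [x y [u [v [-> ->]]]| x | x y _ IH | x y z _ IH1 _ IH2].
- by apply: rst_step; exists u, (v ++ q); rewrite -!catA.
- exact: rst_refl.
- exact: rst_sym.
- exact: rst_trans IH2.
Qed.

Lemma E_inv (T : Type) (f : seq bool -> T) :
  (forall u v, f (u ++ nseq k la ++ lb :: v) = f (u ++ lb :: v)) ->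
  forall x y, E x y -> f x = f y.
Proof.
move=> Hf x y; elim=> {x y} [x y [u [v [-> ->]]]| x | x y _ IH | x y z _ IH1 _ IH2] //.
- by rewrite -catA Hf.
- by rewrite IH1.
Qed.

Lemma E_del1 v : lb \in v -> E (nseq k la ++ v) v.
Proof.
elim: v => // x v IH; rewrite in_cons; case: x => /=.
- move=> H; have {}H : lb \in v by exact: H.
  rewrite nseq_cons_comm -cat1s; rewrite -[la :: v]cat1s.
  exact: E_catl (IH H).
- move=> _; apply: rst_step; exists [::], v; by rewrite -catA.
Qed.

Lemma E_del u v t : lb \in v -> E (u ++ nseq (k * t) la ++ v) (u ++ v).
Proof.
move=> Hv; apply: E_catl; elim: t => [|t IH]; first by rewrite muln0; exact: E_refl.
rewrite mulnS nseqD -catA; apply: E_trans IH; apply: E_del1.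
by rewrite mem_cat Hv orbT.
Qed.

Definition wtb (w : seq bool) := count_mem lb w.
Lemma E_wtb x y : E x y -> wtb x = wtb y.
Proof using Type.
by apply: E_inv => u v; rewrite /wtb !count_cat /= count_nseq /= mul0n add0n.
Qed.

Definition ta (w : seq bool) := find (pred1 lb) (rev w).
Lemma ta_cat u v : ta (u ++ v) = if lb \in v then ta v else size v + ta u.
Proof.
by rewrite /ta rev_cat find_cat has_pred1 mem_rev size_rev.
Qed.
Lemma ta_le w : ta w <= size w.
Proof. by rewrite /ta -(size_rev w) find_size. Qed.

Lemma E_ta x y : E x y -> ta x = ta y.
Proof.
apply: E_inv => u v.
have H1 w : ta (w ++ lb :: v) = ta (lb :: v) by rewrite ta_cat inE eqxx.
by rewrite catA !H1.
Qed.

Fixpoint irr_aux (r : nat) (w : seq bool) : bool :=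
  match w with [::] => true
  | x :: w' => if x then irr_aux r.+1 w' else (r < k) && irr_aux 0 w' end.
Fixpoint ra (r : nat) (w : seq bool) : nat :=
  match w with [::] => r | x :: w' => if x then ra r.+1 w' else ra 0 w' end.
Fixpoint nf_aux (r : nat) (w : seq bool) : seq bool :=
  match w with [::] => nseq r la
  | x :: w' => if x then nf_aux r.+1 w' else nseq (r %% k) la ++ lb :: nf_aux 0 w' end.

Lemma irr_cat r x y : irr_aux r (x ++ y) = irr_aux r x && irr_aux (ra r x) y.
Proof. by elim: x r => //= -[] x IH r; rewrite IH // andbA. Qed.
Lemma ra_cat r x y : ra r (x ++ y) = ra (ra r x) y.
Proof. by elim: x r => //= -[] x IH r; rewrite IH. Qed.
Lemma irr_nseq r j y : irr_aux r (nseq j la ++ y) = irr_aux (r + j) y.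
Proof. by elim: j r => [|j IH] r /=; rewrite ?addn0 // IH addnS. Qed.
Lemma ra_nseq r j : ra r (nseq j la) = r + j.
Proof. by elim: j r => [|j IH] r /=; rewrite ?addn0 // IH addnS. Qed.
Lemma nf_nseq r j y : nf_aux r (nseq j la ++ y) = nf_aux (r + j) y.
Proof. by elim: j r => [|j IH] r /=; rewrite ?addn0 // IH addnS. Qed.

Lemma irr_min r w : irr_aux (minn r k) w = irr_aux r w.
Proof.
elim: w r => //= -[] w IH r.
- rewrite -IH -[in RHS]IH; congr irr_aux; lia.
- congr (_ && _); apply/idP/idP; lia.
Qed.

Lemma nf_step u v r : nf_aux r (u ++ nseq k la ++ lb :: v) = nf_aux r (u ++ lb :: v).
Proof.
elim: u r => [|x u IH] r /=; last by case: x; rewrite IH.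
by rewrite nf_nseq /= modnDr.
Qed.

Definition irr w := irr_aux 0 w.
Definition nf w := nf_aux 0 w.

Lemma E_nf_eq x y : E x y -> nf x = nf y.
Proof. by apply: E_inv => u v; rewrite /nf nf_step. Qed.

Lemma nf_irr r w : irr_aux r w -> nf_aux r w = nseq r la ++ w.
Proof.
elim: w r => [|x w IH] r /=; first by rewrite cats0.
case: x => H; first by rewrite IH // (nseq_cons_comm true).
case/andP: H => Hr Hw; by rewrite IH // modn_small.
Qed.

Lemma E_nf_aux r w : E (nseq r la ++ w) (nf_aux r w).
Proof.
elim: w r => [|x w IH] r /=; first by rewrite cats0; exact: E_refl.
case: x; first by rewrite (nseq_cons_comm true); exact: (IH r.+1).
rewrite {1}(divn_eq r k) nseqD -catA mulnC; apply: E_trans.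
  by apply: (@E_del [::]); rewrite mem_cat inE eqxx orbT.
apply: (E_catl (nseq (r %% k) la)); rewrite -(cat1s false w) -(cat1s lb); apply: (E_catl [:: lb]); exact: (IH 0).
Qed.

Lemma E_nf w : E w (nf w).
Proof. exact: (E_nf_aux 0). Qed.

Lemma irr_nf_aux r w : irr_aux 0 (nf_aux r w).
Proof.
elim: w r => [|x w IH] r /=; first by rewrite -[nseq r la]cats0 irr_nseq.
case: x; first exact: IH.
by rewrite irr_nseq /= ltn_pmod //; exact: IH.
Qed.

Lemma irr_nf w : irr (nf w). Proof. exact: irr_nf_aux. Qed.

Lemma nf_nil_aux r w : nf_aux r w = [::] -> r = 0 /\ w = [::].
Proof.
elim: w r => [|x w IH] r; first by case: r.
case: x => /=; first by case/IH.
by move=> /(congr1 size); rewrite size_cat /= addnS.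
Qed.
End Semi.
Section Pad.
Variable A : finType.

Definition Z1 (s : seq A) : seq (option A * option A) := map (fun x => (Some x, None)) s.
Definition Z2 (s t : seq A) : seq (option A * option A) := zip (map Some s) (map Some t).

Lemma val_pmap_insub (s : seq (option A * option A)) :
  all (fun p => p != (None,None)) s ->
  map val (pmap (fun p => insub p : option (A2 A)) s) = s.
Proof.
elim: s => //= p s IH /andP [Hp Hs].
case: insubP => [u _ Hu|]; last by rewrite Hp.
by rewrite /= Hu IH.
Qed.

Lemma all_zipl (s : seq A) (t : seq (option A)) :
  all (fun p => p != (None,None)) (zip (map Some s) t).
Proof. by elim: s t => [|x s IH] [|y t] //=. Qed.
Lemma all_zipr (s : seq A) (t : seq (option A)) :
  all (fun p => p != (None,None)) (zip t (map Some s)).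
Proof. by elim: s t => [|x s IH] [|[y|] t] //=. Qed.

Lemma size_padL n (s : seq A) : size s <= n -> size (padL n s) = n.
Proof. by rewrite /padL size_cat size_nseq size_map => H; rewrite subnK. Qed.

Lemma deltaL_val (a b : seq A) :
  map val (deltaL a b) = zip (padL (maxn (size a) (size b)) a) (padL (maxn (size a) (size b)) b).
Proof.
rewrite /deltaL; apply: val_pmap_insub.
case: (leqP (size b) (size a)) => H.
- rewrite /padL subnn /=; exact: all_zipl.
- rewrite /padL subnn /= ?cats0. exact: all_zipr.
Qed.

Lemma pmap_padL n (s : seq A) : pmap id (padL n s) = s.
Proof.
rewrite /padL pmap_cat; elim: (n - size s) => [|j IH] /=.
- by elim: s => //= x s ->.
- exact: IH.
Qed.

Lemma deltaL_inj (a1 b1 a2 b2 : seq A) :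
  deltaL a1 b1 = deltaL a2 b2 -> a1 = a2 /\ b1 = b2.
Proof.
move=> /(congr1 (map val)); rewrite !deltaL_val => H.
have Hs1 := size_padL (leq_maxl (size a1) (size b1)).
have Hs1' := size_padL (leq_maxr (size a1) (size b1)).
have Hs2 := size_padL (leq_maxl (size a2) (size b2)).
have Hs2' := size_padL (leq_maxr (size a2) (size b2)).
have := congr1 unzip1 H; have := congr1 unzip2 H.
rewrite !unzip1_zip ?Hs1 ?Hs1' ?Hs2 ?Hs2' // !unzip2_zip ?Hs1 ?Hs1' ?Hs2 ?Hs2' //.
move=> /(congr1 (pmap id)); rewrite !pmap_padL => ->.
by move=> /(congr1 (pmap id)); rewrite !pmap_padL => ->.
Qed.

Lemma zip_Z1 (p : seq A) : zip (map Some p) (nseq (size p) None) = Z1 p.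
Proof. by elim: p => //= x p ->. Qed.

Lemma deltaL_split (p q b : seq A) : size q = size b ->
  map val (deltaL (p ++ q) b) = Z1 p ++ Z2 q b.
Proof.
move=> Hq; rewrite deltaL_val /padL !size_cat Hq.
rewrite (maxn_idPl (leq_addl _ _)) subnn addnK /= map_cat zip_cat.
  by rewrite zip_Z1.
by rewrite size_map size_nseq.
Qed.
End Pad.
Lemma split_last_has (T : Type) (P : pred T) (s : seq T) : has P s ->
  exists s1 z s2, [/\ s = s1 ++ z :: s2, P z & ~~ has P s2].
Proof.
elim: s => //= x s IH; case: (boolP (has P s)) => [/IH [s1 [z [s2 [-> Pz Hs2]]]] _ | Hn].
- by exists (x :: s1), z, s2.
- rewrite orbF => Px; by exists [::], x, s.
Qed.

Lemma nob_nseq (s : seq bool) : lb \notin s -> s = nseq (size s) la.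
Proof. by elim: s => //= -[] s IH; rewrite inE //= => /IH {1}->. Qed.

Section NotBi.
Variables (k : nat) (A : finType) (gen : A -> seq bool) (L : seq A -> Prop).
Hypothesis kpos : 0 < k.
Hypothesis RL : rep_lang (sk_cong k) gen L.
Variable c : A.
Hypothesis Hc : lb \in gen c.
Variable M : dfa (A2 A).
Hypothesis HM : forall w, LaL (sk_cong k) gen L (Some c) w <-> dfa_accept M w.
Local Notation E := (sk_cong k).
Local Notation ph := (phi gen).

Lemma phi_cat x y : ph (x ++ y) = ph x ++ ph y.
Proof. by rewrite /phi map_cat flatten_cat. Qed.
Lemma phi1 x : ph [:: x] = gen x.
Proof. by rewrite /phi /= cats0. Qed.
Lemma phi_cons x y : ph (x :: y) = gen x ++ ph y.
Proof. by []. Qed.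

Definition Cb := \max_(x : A) size (gen x).

Lemma size_phi s : size (ph s) <= Cb * size s.
Proof.
elim: s => [|x s IH]; first by [].
rewrite phi_cons size_cat mulnS leq_add //; exact: (leq_bigmax x).
Qed.
Lemma wtb_phi s : wtb (ph s) <= Cb * size s.
Proof. apply: leq_trans (size_phi s); exact: count_size. Qed.

Lemma nohas_phi s : ~~ has (fun z => lb \in gen z) s -> lb \notin ph s.
Proof.
elim: s => // x s IH /=; rewrite negb_or => /andP [H1 H2].
by rewrite phi_cons mem_cat negb_or H1 IH.
Qed.
Lemma mem_phi z s : z \in s -> lb \in gen z -> lb \in ph s.
Proof.
elim: s => // x s IH; rewrite inE => /orP [/eqP -> H|/IH H /H {}H];
  by rewrite phi_cons mem_cat ?H ?orbT.
Qed.

Definition Nst := #|dfa_state M|.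
Definition mm := Cb * (Nst * k) + 1.
Definition yy := nseq mm lb ++ gen c.

Lemma yy_ne : yy != [::]. Proof. by rewrite /yy /mm addn1. Qed.

Variable be : seq A.
Hypothesis Lbe : L be.
Hypothesis Ebe : E yy (ph be).

Definition nn := k * (Cb * size be + 1).
Definition xx := nseq mm lb ++ nseq nn la.

Lemma xx_ne : xx != [::]. Proof. by rewrite /xx /mm addn1. Qed.

Lemma shrink al : L al -> E xx (ph al) ->
  exists al', [/\ L al', E xx (ph al') & size al' < size al].
Proof.
move=> Lal Eal.
have Hacc : dfa_accept M (deltaL al be).
  apply/HM; exists al, be; split => //.
  rewrite phi_cat phi1; apply: E_trans (E_catr _ (E_sym Eal)) _.
  apply: E_trans Ebe; rewrite /xx /yy -catA /nn; apply: E_del => //.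
have Wal : wtb (ph al) = mm.
  rewrite -(E_wtb Eal) /xx /wtb count_cat !count_nseq /=; lia.
have Tal : ta (ph al) = nn.
  rewrite -(E_ta Eal) /xx ta_cat mem_nseq andbF size_nseq /mm addn1 /ta rev_nseq /=.
  by rewrite addn0.
have Hhas : has (fun z => lb \in gen z) al.
  apply/negPn/negP => /nohas_phi /count_memPn; rewrite -/(wtb _) Wal /mm addn1 //.
case: (split_last_has Hhas) => a1 [z [a2 [Hal Hz Ha2]]].
have Ha2' := nohas_phi Ha2.
have Hbe : size be <= size a2.
  have H1 : nn <= Cb * size a2 + Cb.
    rewrite -Tal Hal phi_cat phi_cons catA ta_cat (negbTE Ha2') ta_cat Hz.
    apply: leq_add; first exact: size_phi.
    apply: leq_trans (ta_le _) _; exact: (leq_bigmax z).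
  have H2 : Cb * size be + 1 <= nn by rewrite /nn leq_pmull.
  have : Cb * size be < Cb * (size a2).+1 by rewrite mulnS; clear -H1 H2; lia.
  by rewrite ltn_mul2l => /andP [_].
have Ha1 : Nst * k < (size a1).+1.
  have H1 : mm <= Cb * size a1 + Cb.
    rewrite -Wal Hal phi_cat phi_cons /wtb !count_cat (count_memPn Ha2') addn0.
    apply: leq_add; first exact: wtb_phi.
    apply: leq_trans (count_size _ _) _; exact: (leq_bigmax z).
  have : Cb * (Nst * k) < Cb * (size a1).+1 by rewrite mulnS; rewrite /mm in H1; clear -H1; lia.
  by rewrite ltn_mul2l => /andP [_].
set w := deltaL al be.
pose f (i : 'I_(size a1).+1) :=
  (foldl (dfa_trans (d:=M)) (dfa_start M) (take i w),
   Ordinal (ltn_pmod (count_mem la (ph (take i al))) kpos)).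
have Hni : ~~ injectiveb f.
  apply/injectiveP => Hinj; have := leq_card f Hinj.
  by rewrite card_prod !card_ord -/Nst leqNgt Ha1.
have [i [j [Hij Hf]]] : exists i j : 'I_(size a1).+1, i < j /\ f i = f j.
  case/injectivePn: Hni => i [j Hne Hf]; case: (ltngtP i j) => H.
  - by exists i, j.
  - by exists j, i.
  - by move: Hne; rewrite (val_inj H) eqxx.
move: Hf => [Hst Hcnt].
have Hj : j <= size a1 by rewrite -ltnS.
have Hsal : size al = size a1 + (size a2).+1 by rewrite Hal size_cat.
set d := size al - size be.
have Hbeal : size be <= size al by rewrite Hsal; clear -Hbe; lia.
have Hjd : j < d by rewrite /d; clear -Hj Hsal Hbe; lia.
set P := take d al; set Q := drop d al.
have HPQ : al = P ++ Q by rewrite cat_take_drop.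
have HsP : size P = d by rewrite size_takel // /d leq_subr.
have HsQ : size Q = size be by rewrite size_drop /d subKn.
set al' := take i al ++ drop j al.
have Hal' : al' = (take i P ++ drop j P) ++ Q.
  rewrite /al' HPQ take_cat drop_cat HsP.
  have -> : (i < d) = true by apply/idP; apply: ltn_trans Hij Hjd.
  have -> : (j < d) = true by apply/idP; exact: Hjd.
  by rewrite catA.
have Hw' : take i w ++ drop j w = deltaL al' be.
  apply: (inj_map val_inj).
  rewrite map_cat map_take map_drop /w {1 2}HPQ Hal' !deltaL_split //.
  rewrite take_cat drop_cat /Z1 !size_map HsP.
  have -> : (i < d) = true by apply/idP; apply: ltn_trans Hij Hjd.
  have -> : (j < d) = true by apply/idP; exact: Hjd.
  by rewrite map_cat -map_take -map_drop catA.
have Hacc' : dfa_accept M (deltaL al' be).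
  by rewrite -Hw' /dfa_accept foldl_cat Hst -foldl_cat cat_take_drop.
move/HM: Hacc' => [a'' [b'' [La'' Lb'' E'' /deltaL_inj [Ha'' Hb'']]]].
subst a'' b''.
set seg := drop i (take j al).
have Htj : take j al = take i al ++ seg.
  by rewrite /seg -{1}(cat_take_drop i (take j al)) take_takel // ltnW.
have Hal2 : al = take i al ++ seg ++ drop j al.
  by rewrite catA -Htj cat_take_drop.
have Hwseg : lb \notin ph seg.
  have HH := E_wtb E''.
  have HH2 : wtb (ph (al ++ [:: c])) = wtb (ph be).
    apply: E_wtb; rewrite phi_cat phi1; apply: E_trans (E_catr _ (E_sym Eal)) _.
    apply: E_trans Ebe; rewrite /xx /yy -catA /nn; apply: E_del => //.
  move: HH HH2; rewrite /al' !phi_cat phi1 /wtb !count_cat => HH HH2.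
  have Ew : count_mem lb (ph al) = count_mem lb (ph (take i al)) +
     count_mem lb (ph seg) + count_mem lb (ph (drop j al)).
    by rewrite {1}Hal2 !phi_cat !count_cat addnA.
  apply/count_memPn; clear -HH HH2 Ew; lia.
have Hseg : ph seg = nseq (size (ph seg)) la := nob_nseq Hwseg.
have Hmod : size (ph seg) %% k = 0.
  have Hc' : count_mem la (ph seg) = size (ph seg).
    by rewrite {1}Hseg count_nseq /= mul1n.
  move: Hcnt; rewrite Htj phi_cat count_cat => /eqP.
  rewrite -{1}[count_mem la (ph (take i al))]addn0 eqn_modDl mod0n Hc' => /eqP.
  by move=> <-.
have Hdrop : lb \in ph (drop j al).
  apply: (mem_phi (z := z)) => //.
  rewrite Hal drop_cat; case: ltnP => H.
  - by rewrite mem_cat inE eqxx orbT.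
  - have -> : j - size a1 = 0 by apply/eqP; rewrite subn_eq0.
    by rewrite drop0 inE eqxx.
exists al'; split => //.
- have Hq : size (ph seg) = k * (size (ph seg) %/ k).
    by rewrite {1}(divn_eq (size (ph seg)) k) Hmod addn0 mulnC.
  apply: E_trans Eal _; rewrite {1}Hal2 /al' !phi_cat Hseg Hq.
  exact: E_del.
- rewrite /al' size_cat size_take size_drop; move: Hij Hj Hsal.
  move: (nat_of_ord i) (nat_of_ord j) => i0 j0; case: ifP => H; clear -H; lia.
Qed.

Lemma notbi_contra : False.
Proof.
case: RL => _ _ /(_ _ xx_ne) [a0 [La0 Ea0]].
suff : forall s al, size al <= s -> L al -> E xx (ph al) -> False.
  by move/(_ (size a0) a0 (leqnn _) La0 Ea0).
elim=> [|s IH] al Hs Lal Eal; case: (shrink Lal Eal) => al' [L' E' Hlt].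
- lia.
- apply: (IH al') => //; lia.
Qed.
End NotBi.
Lemma not_biautomatic k : 0 < k -> ~ biautomatic (sk_cong k).
Proof.
move=> kpos [A [gen [L [GS RL Hreg]]]].
have [c Hc] : exists c, lb \in gen c.
  case: GS => _ _ /(_ [:: lb] isT) [w [_ Ew]].
  have := E_wtb Ew; rewrite /wtb /= => H.
  have : lb \in phi gen w by rewrite -has_pred1 has_count -H.
  by rewrite /phi => /flattenP [s /mapP [c _ ->] Hs]; exists c.
case: (Hreg (Some c)) => _ [M HM] _ _.
have Hy := @yy_ne k A gen c M.
case: (RL) => _ _ /(_ _ Hy) [be [Lbe Ebe]].
exact: (notbi_contra kpos RL Hc HM Lbe Ebe).
Qed.
Section PadR.
Variable A : finType.
Definition pp (x y : A) : A2 A := exist _ (Some x, Some y) isT.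
Definition pN (y : A) : A2 A := exist _ (None, Some y) isT.
Definition pS (x : A) : A2 A := exist _ (Some x, None) isT.

Lemma letterP (p : A2 A) :
  (exists x y, p = pp x y) \/ (exists y, p = pN y) \/ (exists x, p = pS x).
Proof.
case: p => [[[x|] [y|]] Hp].
- by left; exists x, y; apply: val_inj.
- by right; right; exists x; apply: val_inj.
- by right; left; exists y; apply: val_inj.
- by [].
Qed.

Lemma deltaR_val (a b : seq A) :
  map val (deltaR a b) = zip (padR (maxn (size a) (size b)) a) (padR (maxn (size a) (size b)) b).
Proof.
rewrite /deltaR; apply: val_pmap_insub.
case: (leqP (size b) (size a)) => H.
- rewrite /padR subnn /= cats0; exact: all_zipl.
- rewrite /padR subnn /= cats0; exact: all_zipr.
Qed.

Lemma deltaR_cons x y a b : deltaR (x :: a) (y :: b) = pp x y :: deltaR a b.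
Proof.
apply: (inj_map val_inj); rewrite /= !deltaR_val /= maxnSS /padR /= !subSS.
by [].
Qed.

Lemma deltaR_nil_l b : deltaR [::] b = map pN b.
Proof.
apply: (inj_map val_inj); rewrite deltaR_val max0n /padR /= subnn cats0 subn0.
by elim: b => //= y b ->.
Qed.

Lemma deltaR_nil_r a : deltaR a [::] = map pS a.
Proof.
apply: (inj_map val_inj); rewrite deltaR_val maxn0 /padR /= subnn cats0 subn0.
by elim: a => //= y a ->.
Qed.

Lemma deltaR_cat p a b : deltaR (p ++ a) (p ++ b) = map (fun x => pp x x) p ++ deltaR a b.
Proof. by elim: p => //= x p IH; rewrite deltaR_cons IH. Qed.
End PadR.

Lemma foldl_map' (S T U : Type) (f : S -> U -> S) (g : T -> U) s w :
  foldl f s (map g w) = foldl (fun s x => f s (g x)) s w.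
Proof. by elim: w s => //= x w IH s. Qed.

Section PrefAut.
Variable k : nat.
Hypothesis kpos : 0 < k.
Local Notation E := (sk_cong k).

Definition dg (x : bool) : A2 bool := pp x x.

Definition Qst := option (('I_k.+1 * bool) + option 'I_k.+1).
Definition Dst (r : 'I_k.+1) (ne : bool) : Qst := Some (inl (r, ne)).
Definition D0 : Qst := Dst (inord 0) false.

Definition dtr (md : option bool) (s : Qst) (p : A2 bool) : Qst :=
  match s with
  | Some (inl (r, ne)) =>
    match val p with
    | (Some x, Some y) =>
      if x == y then
        (if x then Some (inl (inord (minn r.+1 k), true))
         else if r < k then Some (inl (inord 0, true)) else None)
      else if [&& md == Some lb, x & r < k] then Some (inr (Some (inord (1 %% k))))
      else None
    | (None, Some y) =>
      if [&& md == Some y, ne & (y || (r < k))] then Some (inr None) else None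
    | _ => None
    end
  | Some (inr None) => None
  | Some (inr (Some c)) =>
    if val p == (Some la, None) then Some (inr (Some (inord (c.+1 %% k)))) else None
  | None => None
  end.

Definition dfin (md : option bool) (s : Qst) : bool :=
  match s with
  | Some (inl (_, ne)) => (md == None) && ne
  | Some (inr None) => true
  | Some (inr (Some c)) => c %% k == 0
  | None => false
  end.

Definition acc md s w := dfin md (foldl (dtr md) s w).

Lemma acc_dead md w : acc md None w = false.
Proof. by elim: w. Qed.

Lemma acc_dead' md w : dfin md (foldl (dtr md) None w) = false.
Proof. exact: acc_dead. Qed.

Lemma acc_fin md w : acc md (Some (inr None)) w = (w == [::]).
Proof. by case: w => // p w; apply: acc_dead. Qed.

Lemma acc_T md (c : 'I_k.+1) w :
  acc md (Some (inr (Some c))) w <-> exists n, w = nseq n (pS la) /\ (c + n) %% k == 0.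
Proof.
elim: w c => [|p w IH] c.
- split; first by move=> H; exists 0; rewrite addn0.
  by case=> -[|n] [] // _; rewrite addn0.
- rewrite /acc /=; case: ifP => Hp.
  + rewrite -/(acc _ _ _) IH inordK; last by rewrite ltnS ltnW // ltn_pmod.
    have -> : p = pS la by apply: val_inj; apply/eqP.
    split=> -[n [Hw Hn]].
    * by exists n.+1; rewrite Hw; split => //; rewrite addnS -addSn -modnDml.
    * case: n Hw Hn => // n [Hw] Hn; exists n; split => //.
      by rewrite modnDml addSn -addnS.
  + rewrite -/(acc _ _ _) acc_dead; split => // -[[|n] [] //= [Hpe _]].
    by move: Hp; rewrite Hpe eqxx.
Qed.

Definition GG (md : option bool) : seq bool := if md is Some false then [:: lb] else [::].
Definition TL (md : option bool) (b : bool) (tl : seq (A2 bool)) : Prop :=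
  match md with
  | None => tl = [::] /\ b
  | Some true => tl = [:: pN la] /\ b
  | Some false => (tl = [:: pN lb] /\ b) \/
                  exists n, tl = pp la lb :: nseq n (pS la) /\ (1 + n) %% k == 0
  end.
Definition Spec md (r : nat) (ne : bool) w :=
  exists v tl, [/\ w = map dg v ++ tl, irr_aux k r (v ++ GG md) & TL md (ne || (v != [::])) tl].

Lemma TL_diag md b x t : TL md b (pp x x :: t) -> False.
Proof.
case: md => [[]|] /=.
- by case=> H _; case: H.
- by case=> [[H _]|[n [H _]]]; case: H => // ->.
- by case.
Qed.

Lemma Spec_diag md r ne x w :
  Spec md r ne (dg x :: w) <->
  exists v tl, [/\ w = map dg v ++ tl, irr_aux k r (x :: v ++ GG md) & TL md true tl].
Proof.
split.
- case=> -[|z v] [tl [/= Hw Hirr HTL]].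
  + by rewrite -Hw in HTL; case: (TL_diag HTL).
  + case: Hw => Hx _ Hw; subst; exists v, tl; split => //; by rewrite orbT in HTL.
- case=> v [tl [-> Hirr HTL]]; exists (x :: v), tl; split => //.
  by rewrite orbT.
Qed.

Lemma Spec_nondiag md r ne p w : (forall x, p != dg x) ->
  Spec md r ne (p :: w) <-> [/\ irr_aux k r (GG md) & TL md ne (p :: w)].
Proof.
move=> Hp; split.
- case=> -[|z v] [tl [/= Hw Hirr HTL]].
  + by rewrite orbF -Hw in HTL.
  + by case: Hw => Hz; move: (Hp z); rewrite Hz eqxx.
- case=> H1 H2; exists [::], (p :: w); split => //; by rewrite orbF.
Qed.

Lemma accD md (r : 'I_k.+1) ne w : acc md (Dst r ne) w <-> Spec md r ne w.
Proof.
elim: w r ne => [|p w IH] r ne.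
- rewrite /acc /=; split.
  + case/andP => /eqP -> Hne; exists [::], [::]; split => //; split => //; by rewrite orbF.
  + case=> -[|z v] [tl [//= Htl Hirr HTL]].
    move: HTL; rewrite -Htl; case: md {Hirr} => [[]|] /=.
    * by case.
    * by case=> [[]|[n []]].
    * by case=> _; rewrite orbF.
- case: (letterP p) => [[x [y ->]]|[[y ->]|[x ->]]].
  + case: (eqVneq x y) => [<-|Hxy].
    * rewrite -/(dg x) Spec_diag /acc /= eqxx; case: x.
      - rewrite -/(acc _ _ _) -/(Dst _ _) IH; split.
        + case=> v [tl [Hw Hirr HTL]]; exists v, tl; split => //.
          by rewrite /= -irr_min // -(inordK (n' := k) (m := minn r.+1 k)) // ltnS geq_minr.
        + case=> v [tl [Hw Hirr HTL]]; exists v, tl; split => //.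
          by rewrite inordK ?irr_min // ltnS geq_minr.
      - case: ifP => Hr.
        + rewrite -/(acc _ _ _) -/(Dst _ _) IH; split.
          * by case=> v [tl [Hw Hirr HTL]]; exists v, tl; split => //; rewrite inordK in Hirr.
          * case=> v [tl [Hw Hirr HTL]]; exists v, tl; split => //; rewrite inordK //; by case/andP: Hirr.
        + rewrite acc_dead'; split => // -[v [tl [_ Hirr _]]].
          by case/andP: Hirr => H; rewrite H in Hr.
    * clear IH; have Hnd : forall z, pp x y != dg z.
        by move=> z; apply/eqP; case=> Hx Hy; move: Hxy; rewrite Hx Hy eqxx.
      rewrite Spec_nondiag // /acc /= (negbTE Hxy).
      case: md => [[]|] /=.
      + rewrite acc_dead'; split => // -[_ [H _]]; by case: H.
      + case: x Hxy Hnd => Hxy Hnd; last first.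
          rewrite /= acc_dead'; split => // -[_ [[H _]|[n [H _]]]]; by case: H.
        case: y Hxy Hnd => // _ _; case: ifP => /= Hr.
        * rewrite -/(acc _ _ _) acc_T inordK; last by rewrite ltnS ltnW // ltn_pmod.
          split.
          - case=> n [-> Hn]; split; first by rewrite /= Hr.
            right; exists n; split => //; by rewrite modnDml in Hn.
          - case=> _ [[H _]|[n [H Hn]]]; first by case: H.
            case: H => ->; exists n; split => //; by rewrite modnDml.
        * rewrite acc_dead'; split => // -[]; by rewrite /= Hr.
      + rewrite acc_dead'; split => // -[_ [H _]]; by case: H.
  + clear IH; have Hnd : forall z, pN y != dg z by move=> z; apply/eqP; case.
    rewrite Spec_nondiag // /acc /=.
    case: ifP => H.
    * rewrite -/(acc _ _ _) acc_fin.
      case/and3P: H => /eqP Hmd Hne Hy; subst md; case: y Hy Hnd => /= Hy _.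
      - split; first by move/eqP => ->; split => //; split.
        by case=> _ [H _]; case: H => ->.
      - split; first by move/eqP => ->; split; [rewrite /= Hy | left].
        by case=> _ [[H _]|[n [H _]]]; case: H => // ->.
    * rewrite acc_dead'; split => // -[Hirr HTL]; move: H.
      case: md Hirr HTL => [[]|] /= Hirr HTL.
      - by case: HTL => -[-> _] ->.
      - case: HTL => [[[->] _] ->|[n [H _]]]; last by case: H.
        by move: Hirr; rewrite /= andbT => ->.
      - by case: HTL => H; case: H.
  + clear IH; have Hnd : forall z, pS x != dg z by move=> z; apply/eqP; case.
    rewrite Spec_nondiag // /acc /= acc_dead'; split => // -[_].
    case: md => [[]|] /=.
    * by case=> H _; case: H.
    * by case=> [[H _]|[n [H _]]]; case: H.
    * by case=> H _; case: H.
Qed.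
End PrefAut.
Definition gen0 (x : bool) : seq bool := [:: x].
Lemma phi0 w : phi gen0 w = w.
Proof. by rewrite /phi; elim: w => //= x w ->. Qed.

Lemma dg_inj : injective dg.
Proof. by move=> x y; case. Qed.

Lemma deltaR_same (A : finType) (al : seq A) : deltaR al al = map (fun x => pp x x) al.
Proof. by rewrite -[al]cats0 deltaR_cat deltaR_nil_l /= !cats0. Qed.

Lemma deltaR_ext (A : finType) (al s : seq A) :
  deltaR al (al ++ s) = map (fun x => pp x x) al ++ deltaR [::] s.
Proof. by rewrite -deltaR_cat cats0. Qed.

Lemma decomp (al : seq bool) : exists u j, al = u ++ nseq j la /\ ra 0 u = 0.
Proof.
elim/last_ind: al => [|s x [u [j [-> Hu]]]]; first by exists [::], 0.
case: x.
- exists u, j.+1; split => //; by rewrite -cats1 -catA (nseq_cons_comm true) cats0.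
- exists (rcons (u ++ nseq j la) lb), 0; split; first by rewrite cats0.
  by rewrite -cats1 ra_cat.
Qed.

Lemma irr_nseq0 k r j : irr_aux k r (nseq j la).
Proof. by rewrite -[nseq j la]cats0 irr_nseq. Qed.

Section Final.
Variable k : nat.
Hypothesis kpos : 0 < k.
Local Notation E := (sk_cong k).

Definition Lnf : seq bool -> Prop := fun w => (w != [::]) && irr k w.
Definition Lang md : seq (A2 bool) -> Prop :=
  fun w => exists al, Lnf al /\ w = deltaR al (nf k (al ++ ext md)).

Lemma nf_id w : irr k w -> nf k w = w.
Proof. exact: nf_irr. Qed.

Lemma Lang_Spec md w : Lang md w <-> Spec k md 0 false w.
Proof.
case: md => [[]|]; rewrite /Lang /Spec /=.
- split.
  + case=> al [/andP [Hne Hirr] ->].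
    rewrite nf_id; last by rewrite /irr irr_cat -/(irr k al) Hirr.
    exists al, [:: pN la]; split => //; first by rewrite deltaR_ext deltaR_nil_l.
    by rewrite cats0.
  + case=> v [tl [-> Hirr [-> Hne]]]; exists v; split.
      by rewrite /Lnf Hne; rewrite cats0 in Hirr.
    rewrite nf_id; first by rewrite deltaR_ext deltaR_nil_l.
    by rewrite /irr irr_cat; rewrite cats0 in Hirr; rewrite Hirr.
- split.
  + case=> al [/andP [Hne Hirr] ->].
    case: (decomp al) => u [j [Hal Hu]].
    have Hj : j = j %% k + k * (j %/ k) by rewrite addnC mulnC -divn_eq.
    set v := u ++ nseq (j %% k) la.
    have Hal2 : al = v ++ nseq (k * (j %/ k)) la by rewrite Hal {1}Hj nseqD catA.
    have Hirru : irr k u by move: Hirr; rewrite /irr Hal irr_cat => /andP [].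
    have Hv : irr k (v ++ [:: lb]).
      by rewrite /irr -catA irr_cat -/(irr k u) Hirru Hu irr_nseq /= ltn_pmod.
    have Hnf : nf k (al ++ [:: lb]) = v ++ [:: lb].
      rewrite -(nf_id Hv); apply: E_nf_eq; rewrite Hal2 -catA; exact: E_del.
    rewrite Hnf Hal2 deltaR_cat.
    case Ht : (j %/ k) => [|t].
    * exists v, [:: pN lb]; split => //; first by rewrite muln0 deltaR_nil_l.
      by left; split => //; move: Hne; rewrite Hal2 Ht muln0 cats0 => ->.
    * have Hpos : 0 < k * t.+1 by rewrite muln_gt0 kpos.
      exists v, (pp la lb :: nseq (k * t.+1).-1 (pS la)); split => //.
      - by rewrite -(prednK Hpos) /= deltaR_cons deltaR_nil_r map_nseq.
      - right; exists (k * t.+1).-1; split => //.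
        by rewrite add1n prednK // modnMr.
  + case=> v [tl [-> Hirr HTL]].
    have Hirrv : irr k v by move: Hirr; rewrite irr_cat => /andP [].
    case: HTL => [[-> Hne]|[n [-> Hn]]].
    * exists v; split; first by rewrite /Lnf Hirrv andbT.
      by rewrite nf_id // deltaR_ext deltaR_nil_l.
    * have Hn' : n.+1 = k * (n.+1 %/ k).
        by rewrite {1}(divn_eq n.+1 k) mulnC -add1n (eqP Hn) addn0.
      exists (v ++ nseq n.+1 la); split.
        rewrite /Lnf; apply/andP; split; first by case: v {Hirr Hirrv}.
        by rewrite /irr irr_cat -/(irr k v) Hirrv irr_nseq0.
      have -> : nf k ((v ++ nseq n.+1 la) ++ [:: lb]) = v ++ [:: lb].
        rewrite -(nf_id Hirr); apply: E_nf_eq; rewrite -catA Hn'; exact: E_del.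
      by rewrite deltaR_cat /= deltaR_cons deltaR_nil_r map_nseq.
- split.
  + case=> al [/andP [Hne Hirr] ->]; rewrite cats0 nf_id // deltaR_same.
    by exists al, [::]; rewrite !cats0.
  + case=> v [tl [-> Hirr [-> Hne]]]; rewrite cats0 in Hirr.
    exists v; split; first by rewrite /Lnf Hne.
    by rewrite !cats0 nf_id // deltaR_same.
Qed.
End Final.
Section Final2.
Variable k : nat.
Hypothesis kpos : 0 < k.
Local Notation E := (sk_cong k).

Lemma Lang_reg md : regular (Lang k md).
Proof.
exists (@DFA _ (Qst k) (D0 k) (@dfin k md) (@dtr k md)) => w.
rewrite Lang_Spec // /dfa_accept /=.
have H := accD kpos md (inord 0) false w.
rewrite inordK // in H; exact: (iff_sym H).
Qed.

Lemma irr_prefix w s : irr k (w ++ s) -> irr k w.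
Proof. by rewrite /irr irr_cat => /andP []. Qed.

Lemma LaR_Lang md w : LaR E gen0 (Lnf k) md w <-> Lang k md w.
Proof.
split.
- case=> al [be [Lal /andP [_ Hbe] Eab ->]]; rewrite !phi0 in Eab.
  exists al; split => //; by rewrite (E_nf_eq Eab) nf_id.
- case=> al [Lal ->]; exists al, (nf k (al ++ ext md)); split => //.
  + apply/andP; split; last exact: irr_nf.
    apply/eqP => /nf_nil_aux [_]; move: Lal; by case: al.
  + rewrite !phi0; exact: E_nf.
Qed.

Lemma Lnf_reg : regular (Lnf k).
Proof.
exists (@DFA _ (Qst k) (D0 k) (@dfin k None) (fun s x => @dtr k None s (dg x))) => w.
change (Lnf k w <-> dfin None (foldl (fun s x => @dtr k None s (dg x)) (D0 k) w)).
rewrite -foldl_map'.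
have H := accD kpos None (inord 0) false (map dg w).
rewrite inordK // in H; rewrite -/(acc _ _ _); rewrite H.
split.
- move=> /andP [Hne Hirr]; exists w, [::]; rewrite !cats0; split => //.
- case=> v [tl [Hw Hirr [Htl Hne]]]; subst tl.
  rewrite cats0 in Hw; rewrite /= cats0 in Hirr; rewrite (inj_map dg_inj Hw).
  apply/andP; split; [exact: Hne | exact: Hirr].
Qed.

Lemma gen0_set : gen_set E gen0.
Proof.
split => //.
- by move=> i j /E_wtb; case: i; case: j.
- move=> x Hx; exists x; split => //; rewrite phi0; exact: E_refl.
Qed.

Lemma prefix_aut : prefix_automatic E.
Proof.
exists _, gen0, (Lnf k); split.
- split; first exact: gen0_set.
  + split; first exact: Lnf_reg.
    * by move=> w /andP [].
    * move=> x Hx; exists (nf k x); split; last by rewrite phi0; exact: E_nf.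
      apply/andP; split; last exact: irr_nf.
      by apply/eqP => /nf_nil_aux [_ Hx0]; rewrite Hx0 in Hx.
  + move=> oa; case: (Lang_reg oa) => M HM; exists M => w.
    by rewrite LaR_Lang.
- case: (Lang_reg None) => M HM; exists M => w; rewrite -HM; split.
  + case=> al [be [Lal [ga Hga] Eab ->]]; rewrite !phi0 in Eab.
    case/andP: (Lal) => _ Hal; case/andP: Hga => _ /irr_prefix Hbe.
    have Hab : al = be by rewrite -(nf_id Hal) -(nf_id Hbe); exact: E_nf_eq.
    subst be; exists al; split => //; by rewrite /= cats0 nf_id.
  + case=> al [Lal ->]; exists al, al; split => //.
    * by exists [::]; rewrite cats0.
    * exact: E_refl.
    * by rewrite /= cats0 nf_id //; case/andP: Lal.
Qed.
End Final2.

Theorem theorem3p1p8 (k : nat) : 1 <= k ->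
  prefix_automatic (sk_cong k) /\ ~ biautomatic (sk_cong k).
Proof.
move=> kpos; split; [exact: prefix_aut | exact: not_biautomatic].
Qed.
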